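(* Let $\omega$ be a non-principal ultrafilter and $d=(d_n)$ a scaling sequence with $\lim_\omega d_n=\infty$. The inclusion $i:K_2\to G$ induces a bi-Lipschitz embedding $\hat{i}:Con^\omega(K_2,d)\hookrightarrow Con^\omega(G,d)$.
   Context: $G=F_2(a,b)*_{K(a,b)=K(x,y)}F_2(x,y)$ with word metric for $\{a^{\pm1},b^{\pm1},x^{\pm1},y^{\pm1}\}$, where $F_2(a,b)$, $F_2(x,y)$ are copies of the free group of rank 2 and $K(x,y)$ is the image of $K(a,b)$ under $a\mapsto x,b\mapsto y$. $K=\bigcup_nK_n$ with ($|h|$ word length, $(h,k)_1$ Gromov product at $1$, $(h,H)_1=\max_{k\in H}(h,k)_1$, $T(n)$ the tower of $2$'s of height $n$, $U(n)(a,b)=[a^{T(n)+1}b^{T(n)+1}]\cdots[a^{T(n+1)}b^{T(n+1)}]$): $K_1=\langle g_1\rangle$, $g_1$ not a proper power; $K_{n+1}=\langle K_n,g_{n+1}\rangle$ where $g_{n+1}\in F_2\setminus K_n$ is cyclically reduced, no proper power of $a$ or $b$ lies in $K_n$, $(g_{n+1},K_n)_1=\min_{h\in F_2\setminus K_n}(h,K_n)_1$, and $g_{n+1}=h_{n+1}c_{n+1}U(N(n))d_{n+1}$ with $h_{n+1}$ an initial segment of a geodesic ray $r$ from $1$ minimizing $(r,K_n)_1$, $(h_{n+1},K_n)_1$ equal to that minimum, $|h_{n+1}|=(h_{n+1},K_n)_1+1$; $N(n)$ at least twice the maximal $m$ with $a^m$ or $b^m$ a subword of a freely reduced word of $K_n$,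 and $N(n)>|h_{n+1}|$; $c_{n+1},d_{n+1}\in\{a^{\pm1},b^{\pm1}\}$ making $g_{n+1}$ cyclically reduced. $K_2=\langle g_1,g_2\rangle\subset F_2(a,b)\subset G$ is a free group of rank 2, with a word metric for a finite generating set. Asymptotic cones are ultralimits of the metrics scaled by $1/d_n$, based at the identity. *)

(* Defs.v *)
From mathcomp Require Import all_boot.
From Stdlib Require Import Reals ClassicalEpsilon.
Set Implicit Arguments. Unset Strict Implicit. Unset Printing Implicit Defensive.

(* A letter (i, s): generator number i (0 = a, 1 = b, 2 = x, 3 = y),
   exponent +1 if s = true, -1 if s = false. *)
Definition letter := (nat * bool)%type.
Definition word := seq letter.

Definition linv (l : letter) : letter := (l.1, ~~ l.2).
Definition winv (w : word) : word := rev (map linv w).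

Definition red_step (st : word) (l : letter) : word :=
  match st with
  | l' :: st' => if l' == linv l then st' else l :: st
  | [::] => [:: l]
  end.
Definition reduce (w : word) : word := rev (foldl red_step [::] w).
Definition reduced (w : word) : Prop := reduce w = w.
Definition mul (u v : word) : word := reduce (u ++ v).

Definition cyc_reduced (w : word) : Prop :=
  reduced w /\ (forall l0, w != [::] -> last l0 w != linv (head l0 w)).

Definition lettersF2 (w : word) : bool := all (fun l => l.1 < 2) w.
Definition lettersF4 (w : word) : bool := all (fun l => l.1 < 4) w.
Definition inF2 (w : word) : Prop := lettersF2 w /\ reduced w.

Definition shiftxy (w : word) : word := map (fun l => (l.1 + 2, l.2)) w.

Definition wpow (w : word) (m : nat) : word := reduce (flatten (nseq m w)).
Definition proper_power (w : word) : Prop :=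
  exists (u : word) (m : nat), 2 <= m /\ w = wpow u m.

Definition evalS (S : seq word) (t : seq (nat * bool)) : word :=
  reduce (flatten (map (fun p => if p.2 then nth [::] S p.1
                                 else winv (nth [::] S p.1)) t)).
Definition in_gen (S : seq word) (w : word) : Prop :=
  exists t : seq (nat * bool), all (fun p => p.1 < size S) t /\ w = evalS S t.

(* least element of a (nonempty) set of naturals; 0 if empty *)
Definition natinf (P : nat -> Prop) : nat :=
  epsilon (inhabits 0%N) (fun m => P m /\ forall m', P m' -> m <= m').

Definition distS (S : seq word) (u v : word) : nat :=
  natinf (fun m => exists t : seq (nat * bool),
            size t = m /\ all (fun p => p.1 < size S) t /\
            evalS S t = mul (winv u) v).

Definition wlen (w : word) : nat := size w.
Definition gprod (h k : word) : nat :=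
  (wlen h + wlen k - wlen (mul (winv h) k)) %/ 2.
Definition gprod_set (H : word -> Prop) (h : word) (m : nat) : Prop :=
  (exists k, H k /\ gprod h k = m) /\ (forall k, H k -> gprod h k <= m).

(* geodesic rays from 1 in the Cayley tree of F_2(a,b): infinite reduced words *)
Definition ray (r : nat -> letter) : Prop :=
  (forall i, (r i).1 < 2) /\ (forall i, r i.+1 != linv (r i)).
Definition prefix (r : nat -> letter) (t : nat) : word := mkseq r t.
(* (r,k)_1 = lim_t (r(t),k)_1 (eventually constant) *)
Definition gprod_ray (r : nat -> letter) (k : word) (m : nat) : Prop :=
  exists T, forall t, T <= t -> gprod (prefix r t) k = m.
Definition gprod_ray_set (H : word -> Prop) (r : nat -> letter) (m : nat) : Prop :=
  (exists k, H k /\ gprod_ray r k m) /\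
  (forall k m', H k -> gprod_ray r k m' -> m' <= m).

Fixpoint tower (n : nat) : nat := if n is n'.+1 then 2 ^ tower n' else 1.
Definition apow (i : nat) : word := nseq i (0, true).
Definition bpow (i : nat) : word := nseq i (1, true).
Definition comm (u v : word) : word := winv u ++ winv v ++ u ++ v.
(* U(n)(a,b) = [a^{T(n)+1}, b^{T(n)+1}] ... [a^{T(n+1)}, b^{T(n+1)}] *)
Definition Uword (n : nat) : word :=
  flatten (map (fun i => comm (apow i) (bpow i))
               (iota (tower n).+1 (tower n.+1 - tower n))).

(* K_n = < g_1, ..., g_n > (g 0 is unused) *)
Definition Kn (g : nat -> word) (n : nat) : word -> Prop :=
  in_gen (map g (iota 1 n)).
Definition Kall (g : nat -> word) (w : word) : Prop := exists n, Kn g n w.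

Definition is_max_power (H : word -> Prop) (M : nat) : Prop :=
  (exists w, H w /\ [|| infix (nseq M (0, true)) w, infix (nseq M (0, false)) w,
                        infix (nseq M (1, true)) w | infix (nseq M (1, false)) w]) /\
  (forall w m, H w -> [|| infix (nseq m (0, true)) w, infix (nseq m (0, false)) w,
                        infix (nseq m (1, true)) w | infix (nseq m (1, false)) w] ->
               m <= M).

Definition construction (g h : nat -> word) (c d : nat -> letter) (N : nat -> nat)
  : Prop :=
  inF2 (g 1) /\ ~ proper_power (g 1) /\
  forall n, 1 <= n ->
    (forall m, 2 <= m -> ~ Kn g n (apow m) /\ ~ Kn g n (bpow m)) /\
    inF2 (g n.+1) /\ ~ Kn g n (g n.+1) /\ cyc_reduced (g n.+1) /\
    (exists m0, gprod_set (Kn g n) (g n.+1) m0 /\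
       forall h' m, inF2 h' -> ~ Kn g n h' -> gprod_set (Kn g n) h' m -> m0 <= m) /\
    (exists (r : nat -> letter) (mr : nat),
       ray r /\ gprod_ray_set (Kn g n) r mr /\
       (forall r' m', ray r' -> gprod_ray_set (Kn g n) r' m' -> mr <= m') /\
       h n.+1 = prefix r (wlen (h n.+1)) /\
       gprod_set (Kn g n) (h n.+1) mr /\ wlen (h n.+1) = mr.+1) /\
    (exists M, is_max_power (Kn g n) M /\ 2 * M <= N n) /\
    wlen (h n.+1) < N n /\
    (c n.+1).1 < 2 /\ (d n.+1).1 < 2 /\
    g n.+1 = h n.+1 ++ c n.+1 :: Uword (N n) ++ [:: d n.+1].

(* normal closure in F(a,b,x,y) of { k psi(k)^-1 : k in K } *)
Inductive relG (g : nat -> word) : word -> Prop :=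
| relG_gen k : Kall g k -> relG g (mul k (winv (shiftxy k)))
| relG_nil : relG g [::]
| relG_mul u v : relG g u -> relG g v -> relG g (mul u v)
| relG_inv u : relG g u -> relG g (winv u)
| relG_conj u w : lettersF4 w -> relG g u -> relG g (reduce (winv w ++ u ++ w)).

Definition distG (g : nat -> word) (u v : word) : nat :=
  natinf (fun m => exists w, size w = m /\ lettersF4 w /\
            relG g (mul (winv w) (mul (winv u) v))).

Definition ultrafilter (U : (nat -> Prop) -> Prop) : Prop :=
  U (fun _ => True) /\ ~ U (fun _ => False) /\
  (forall A B : nat -> Prop, (forall n, A n -> B n) -> U A -> U B) /\
  (forall A B : nat -> Prop, U A -> U B -> U (fun n => A n /\ B n)) /\
  (forall A : nat -> Prop, U A \/ U (fun n => ~ A n)).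
Definition nonprincipal (U : (nat -> Prop) -> Prop) : Prop :=
  forall m : nat, ~ U (fun n => n = m).
Definition ulim (U : (nat -> Prop) -> Prop) (u : nat -> R) (l : R) : Prop :=
  forall eps : R, (0 < eps)%R -> U (fun n => (Rabs (u n - l) < eps)%R).

(* Main.v *)
Require Import Defs.
From mathcomp Require Import all_boot.
From Stdlib Require Import Reals.
From Stdlib Require Import Classical ClassicalEpsilon Lia Lra Psatz.
From mathcomp Require Import zify.
Set Implicit Arguments. Unset Strict Implicit. Unset Printing Implicit Defensive.

Lemma linvK l : linv (linv l) = l.
Proof. by case: l => a b; rewrite /linv /= negbK. Qed.

Lemma linv_eq a b : (a == linv b) = (b == linv a).
Proof.
apply/eqP/eqP => ->; by rewrite linvK.
Qed.

Definition sok (st : word) := sorted (fun a b => a != linv b) st.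
Definition nocancel (w : word) := sorted (fun a b => b != linv a) w.

Lemma sok_nocancel st : sok st = nocancel (rev st).
Proof. by rewrite /nocancel rev_sorted. Qed.

Lemma red_step_sok st l : sok st -> sok (red_step st l).
Proof.
case: st => [|x st] //= H.
case: ifP => E.
  by move: H; case: st => //= y s /andP[].
rewrite /= H andbT. by rewrite linv_eq E.
Qed.

Lemma foldl_sok st w : sok st -> sok (foldl red_step st w).
Proof. elim: w st => //= l w IH st H; apply: IH; exact: red_step_sok. Qed.

Lemma nocancel_reduce w : nocancel (reduce w).
Proof. by rewrite /reduce -sok_nocancel; apply: foldl_sok. Qed.

Lemma foldl_push l y st : nocancel (l :: y) ->
  foldl red_step (l :: st) y = rev y ++ l :: st.
Proof.
elim: y l st => [|l2 y IH] l st //=.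
move=> /andP[H1 H2].
have -> : (l == linv l2) = false by apply/negbTE; rewrite linv_eq.
by rewrite IH // rev_cons cat_rcons.
Qed.

Lemma foldl_nil_nc x : nocancel x -> foldl red_step [::] x = rev x.
Proof.
case: x => [|l x] //= H.
by rewrite foldl_push // rev_cons cats1.
Qed.

Lemma reduce_nc x : nocancel x -> reduce x = x.
Proof. by move=> H; rewrite /reduce foldl_nil_nc // revK. Qed.

Lemma foldl_struct y st : nocancel y ->
  exists c, c <= size st /\ c <= size y /\
    foldl red_step st y = rev (drop c y) ++ drop c st.
Proof.
elim: y st => [|l y IH] st /=.
  by move=> _; exists 0; rewrite !drop0.
move=> H.
have Hy : nocancel y by move: H; rewrite /nocancel /=; case: y {IH} => //= ? ? /andP[].
case: st => [|x st] /=.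
  exists 0; split=> //; split=> //.
  by rewrite foldl_push // !drop0 cats0 rev_cons cats1.
case: ifP => E.
  have [c [H1 [H2 H3]]] := IH st Hy.
  exists c.+1; rewrite /= !ltnS; split=> //; split=> //.
exists 0; split=> //; split=> //.
by rewrite foldl_push // !drop0 rev_cons cat_rcons.
Qed.

Lemma reduce_struct x y : nocancel x -> nocancel y ->
  exists c, c <= size x /\ c <= size y /\
    reduce (x ++ y) = take (size x - c) x ++ drop c y.
Proof.
move=> Hx Hy.
have [c [H1 [H2 H3]]] := foldl_struct (rev x) Hy.
exists c; rewrite size_rev in H1; split=> //; split=> //.
rewrite /reduce foldl_cat foldl_nil_nc // H3 rev_cat revK drop_rev revK.
by [].
Qed.

Inductive dstar : word -> word -> Prop :=
| ds_refl w : dstar w w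
| ds_step u l v w : dstar (u ++ v) w -> dstar (u ++ l :: linv l :: v) w.

Lemma dstar_trans x y z : dstar x y -> dstar y z -> dstar x z.
Proof.
elim=> // u l v w _ IH H; apply: ds_step; exact: IH.
Qed.

Lemma dstar_cat a b x y : dstar x y -> dstar (a ++ x ++ b) (a ++ y ++ b).
Proof.
elim=> [w|u l v w _ IH]; first exact: ds_refl.
have -> : a ++ (u ++ l :: linv l :: v) ++ b = (a ++ u) ++ l :: linv l :: (v ++ b)
  by rewrite -!catA.
apply: ds_step. by rewrite -!catA in IH *.
Qed.

Lemma dstar_catl a x y : dstar x y -> dstar (a ++ x) (a ++ y).
Proof. by move=> H; have := dstar_cat a [::] H; rewrite !cats0. Qed.

Lemma dstar_catr b x y : dstar x y -> dstar (x ++ b) (y ++ b).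
Proof. by move=> H; have := dstar_cat [::] b H. Qed.

Lemma red_step2 st l : sok st ->
  red_step (red_step st l) (linv l) = st.
Proof.
case: st => [|x st] /=.
  by rewrite linvK eqxx.
move=> H; case: ifP => E.
  move/eqP: E => Ex; subst x.
  case: st H => [|y s] //= /andP[H1 _].
  case: ifP => // /eqP Ey.
  by move: H1; rewrite Ey linvK eqxx.
by rewrite /= linvK eqxx.
Qed.

Lemma foldl_del st u l v : sok st ->
  foldl red_step st (u ++ l :: linv l :: v) = foldl red_step st (u ++ v).
Proof.
move=> H; rewrite !foldl_cat /= red_step2 //; exact: foldl_sok.
Qed.

Lemma dstar_reduce x y : dstar x y -> reduce x = reduce y.
Proof.
elim=> // u l v w _ IH.
by rewrite /reduce foldl_del // -IH.
Qed.

Lemma dstar_foldl st w : dstar (rev st ++ w) (rev (foldl red_step st w)).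
Proof.
elim: w st => [|l w IH] st /=; first by rewrite cats0; exact: ds_refl.
case: st => [|x st] /=.
  have := IH [:: l]; by rewrite /=.
case: ifP => E.
  move/eqP: E => ->.
  rewrite rev_cons -cats1 -catA /=.
  have -> : l = linv (linv l) by rewrite linvK.
  rewrite linvK. apply: ds_step. exact: IH.
have := IH [:: l, x & st].
by rewrite (rev_cons l) cat_rcons.
Qed.

Lemma dstar_red w : dstar w (reduce w).
Proof. exact: (dstar_foldl [::] w). Qed.

Lemma reduceK w : reduce (reduce w) = reduce w.
Proof. by rewrite reduce_nc //; exact: nocancel_reduce. Qed.

Lemma reduce_cat x y : reduce (x ++ y) = reduce (reduce x ++ reduce y).
Proof.
apply: dstar_reduce.
apply: (dstar_trans (dstar_catr y (dstar_red x))).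
exact: dstar_catl (dstar_red y).
Qed.

Lemma reduce_catl x y : reduce (x ++ y) = reduce (x ++ reduce y).
Proof. apply: dstar_reduce; exact: dstar_catl (dstar_red y). Qed.

Lemma reduce_catr x y : reduce (x ++ y) = reduce (reduce x ++ y).
Proof. apply: dstar_reduce; exact: dstar_catr (dstar_red x). Qed.

Lemma reduce_mid a b c : reduce (a ++ b ++ c) = reduce (a ++ reduce b ++ c).
Proof. apply: dstar_reduce; exact: dstar_cat (dstar_red b). Qed.

Lemma winv_cat x y : winv (x ++ y) = winv y ++ winv x.
Proof. by rewrite /winv map_cat rev_cat. Qed.

Lemma winvK x : winv (winv x) = x.
Proof.
rewrite /winv map_rev revK -map_comp.
elim: x => //= l x ->; by rewrite linvK.
Qed.

Lemma size_winv x : size (winv x) = size x.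
Proof. by rewrite /winv size_rev size_map. Qed.

Lemma dstar_winvl x : dstar (winv x ++ x) [::].
Proof.
elim: x => [|l x IH] /=; first exact: ds_refl.
rewrite /winv /= rev_cons -cats1 -catA /=.
have -> : l = linv (linv l) by rewrite linvK.
rewrite linvK; apply: ds_step; exact: IH.
Qed.

Lemma dstar_winvr x : dstar (x ++ winv x) [::].
Proof. by have := dstar_winvl (winv x); rewrite winvK. Qed.

Lemma dstar_winv x y : dstar x y -> dstar (winv x) (winv y).
Proof.
elim=> [w|u l v w _ IH]; first exact: ds_refl.
rewrite !winv_cat /winv /= rev_cons -!cats1 rev_cons -cats1 -!catA /=.
rewrite -/(winv v) -/(winv u).
have -> : linv (linv l) = l by rewrite linvK.
have E : winv (u ++ v) = winv v ++ winv u by rewrite winv_cat.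
apply: ds_step; by rewrite -E.
Qed.

Lemma nocancel_winv x : nocancel x -> nocancel (winv x).
Proof.
rewrite /nocancel /winv rev_sorted sorted_map => H.
apply: sub_sorted H => a b /= H.
by rewrite /linv /= /linv in H *; apply: contra H => /eqP [] -> ->; rewrite /= negbK -?surjective_pairing.
Qed.

Lemma reduce_winv x : reduce (winv x) = winv (reduce x).
Proof.
rewrite (dstar_reduce (dstar_winv (dstar_red x))).
apply: reduce_nc; apply: nocancel_winv; exact: nocancel_reduce.
Qed.

Lemma size_foldl st w : size (foldl red_step st w) <= size st + size w.
Proof.
elim: w st => [|l w IH] st /=; first by rewrite addn0.
apply: leq_trans (IH _) _.
case: st => [|x st] /=; first by [].
case: ifP => _ /=; lia.
Qed.

Lemma size_reduce w : size (reduce w) <= size w.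
Proof. by rewrite /reduce size_rev; apply: leq_trans (size_foldl _ _) _. Qed.

Lemma all_foldl (P : pred letter) st w : all P st -> all P w -> all P (foldl red_step st w).
Proof.
elim: w st => [|l w IH] st //= Hst /andP[Hl Hw].
apply: IH Hw.
case: st Hst => [|x st] /=; first by rewrite Hl.
case: ifP => _ /=; [by case/andP | by move=> ->; rewrite Hl].
Qed.

Lemma all_reduce (P : pred letter) w : all P w -> all P (reduce w).
Proof. by move=> H; rewrite /reduce all_rev; apply: all_foldl. Qed.

Lemma all_winv (P : pred letter) w : (forall l, P l -> P (linv l)) -> all P w -> all P (winv w).
Proof.
move=> HP H; rewrite /winv all_rev all_map.
apply/allP => l Hl /=; apply: HP; exact: (allP H).
Qed.

Lemma mul_nil_l x : Defs.mul [::] x = reduce x.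
Proof. by []. Qed.

Lemma reduce_winvl x y : reduce (winv x ++ (x ++ y)) = reduce y.
Proof.
rewrite catA; apply: dstar_reduce; exact: dstar_catr (dstar_winvl x).
Qed.

Lemma reduce_winvr x y : reduce (x ++ (winv x ++ y)) = reduce y.
Proof.
rewrite catA; apply: dstar_reduce; exact: dstar_catr (dstar_winvr x).
Qed.

Definition fold (l : letter) : letter := (l.1 %% 2, l.2).

Lemma dstar_map x y : dstar x y -> dstar (map fold x) (map fold y).
Proof.
elim=> [w|u l v w _ IH]; first exact: ds_refl.
rewrite map_cat /=. have -> : fold (linv l) = linv (fold l) by [].
apply: ds_step; by rewrite -map_cat.
Qed.

Lemma reduce_map_reduce x : reduce (map fold (reduce x)) = reduce (map fold x).
Proof. symmetry; apply: dstar_reduce; apply: dstar_map; exact: dstar_red. Qed.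

Lemma map_fold_winv x : map fold (winv x) = winv (map fold x).
Proof. by rewrite /winv map_rev -!map_comp. Qed.

Lemma map_fold_F2 x : all (fun l => l.1 < 2) x -> map fold x = x.
Proof.
elim: x => //= [[a b]] x IH /andP[/= Ha Hx].
by rewrite IH // /fold /= modn_small.
Qed.

Lemma map_fold_shift x : all (fun l => l.1 < 2) x -> map fold (shiftxy x) = x.
Proof.
elim: x => //= [[a b]] x IH /andP[/= Ha Hx].
by rewrite IH // /fold /= modnDr modn_small.
Qed.

Lemma relG_fold g u : (forall k, Kall g k -> all (fun l => l.1 < 2) k) ->
  relG g u -> reduce (map fold u) = [::].
Proof.
move=> HK; elim=> {u}.
- move=> k Hk; rewrite /Defs.mul reduce_map_reduce map_cat map_fold_winv.
  rewrite map_fold_F2 ?map_fold_shift; try exact: HK.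
  rewrite (dstar_reduce (dstar_winvr k)) //.
- by [].
- move=> u v _ Hu _ Hv; rewrite /Defs.mul reduce_map_reduce map_cat reduce_cat Hu Hv.
  by [].
- move=> u _ Hu; by rewrite map_fold_winv reduce_winv Hu.
- move=> u w _ _ Hu; rewrite reduce_map_reduce !map_cat reduce_mid Hu /=.
  rewrite map_fold_winv; exact: dstar_reduce (dstar_winvl _).
Qed.

Definition fe (S : seq word) (p : nat * bool) : word :=
  if p.2 then nth [::] S p.1 else winv (nth [::] S p.1).

Lemma evalSE S t : evalS S t = reduce (flatten (map (fe S) t)).
Proof. by []. Qed.

Definition idx (S : seq word) (t : seq (nat * bool)) := all (fun p => p.1 < size S) t.

Lemma evalS_cat S t1 t2 : evalS S (t1 ++ t2) = Defs.mul (evalS S t1) (evalS S t2).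
Proof. by rewrite !evalSE map_cat flatten_cat reduce_cat. Qed.

Definition tinv (t : seq (nat * bool)) := rev (map (fun p => (p.1, ~~ p.2)) t).

Lemma evalS_tinv S t : evalS S (tinv t) = winv (evalS S t).
Proof.
rewrite !evalSE -reduce_winv; congr reduce.
elim: t => [|p t IH] //=.
rewrite /tinv /= rev_cons map_rcons -cats1 flatten_cat -/(tinv t) IH /= cats0.
rewrite winv_cat; congr (_ ++ _).
by rewrite /fe /=; case: (p.2) => //=; rewrite winvK.
Qed.

Lemma idx_tinv S t : idx S t -> idx S (tinv t).
Proof. by rewrite /idx /tinv all_rev all_map. Qed.

Lemma idx_cat S t1 t2 : idx S t1 -> idx S t2 -> idx S (t1 ++ t2).
Proof. by rewrite /idx all_cat => -> ->. Qed.

Lemma in_gen_reduced S q : in_gen S q -> reduce q = q.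
Proof. by case=> t [_ ->]; rewrite /evalS reduceK. Qed.

Lemma in_gen_mul S a b : in_gen S a -> in_gen S b -> in_gen S (Defs.mul (winv a) b).
Proof.
move=> [ta [Ha ->]] [tb [Hb ->]].
exists (tinv ta ++ tb); split; first exact: idx_cat (idx_tinv Ha) Hb.
by rewrite evalS_cat evalS_tinv.
Qed.

Definition Lam (S : seq word) := foldr maxn 0 (map size S).

Lemma size_nth_Lam S j : size (nth [::] S j) <= Lam S.
Proof.
elim: S j => [|s S IH] [|j] //=; rewrite ?nth_nil //.
  exact: leq_maxl.
apply: leq_trans (IH j) (leq_maxr _ _).
Qed.

Lemma size_evalS S t : size (evalS S t) <= Lam S * size t.
Proof.
rewrite evalSE; apply: leq_trans (size_reduce _) _.
elim: t => [|p t IH] //=.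
rewrite size_cat mulnS; apply: leq_add => //.
rewrite /fe; case: (p.2); rewrite ?size_winv; exact: size_nth_Lam.
Qed.

Lemma all_evalS (P : pred letter) S t : (forall l, P l -> P (linv l)) ->
  (forall j, all P (nth [::] S j)) -> all P (evalS S t).
Proof.
move=> HP HS; rewrite evalSE; apply: all_reduce.
elim: t => [|p t IH] //=; rewrite all_cat IH andbT.
rewrite /fe; case: (p.2) => //; exact: all_winv.
Qed.

Lemma ex_min (P : nat -> Prop) m : P m -> exists m0, P m0 /\ forall m', P m' -> m0 <= m'.
Proof.
have : forall n m, m <= n -> P m -> exists m0, P m0 /\ forall m', P m' -> m0 <= m'.
  elim=> [|n IH] m1 Hm HP.
    exists m1; split=> // m' _; move: Hm; rewrite leqn0 => /eqP ->; done.
  destruct (classic (exists m', m' < m1 /\ P m')) as [[m' [H1 H2]]|H].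
    apply: (IH m') => //; lia.
  exists m1; split=> // m' Hm'; case: (leqP m1 m') => // Hlt.
  by exfalso; apply: H; exists m'.
move=> H HP; exact: (H m m).
Qed.

Lemma natinf_spec (P : nat -> Prop) m : P m ->
  P (natinf P) /\ forall m', P m' -> natinf P <= m'.
Proof.
move=> H; exact: (epsilon_spec (inhabits 0%N) (fun m => P m /\ forall m', P m' -> m <= m') (ex_min H)).
Qed.

Lemma distS_eq S u v : distS S u v = distS S [::] (Defs.mul (winv u) v).
Proof. by rewrite /distS /= /Defs.mul /= reduceK. Qed.

Lemma distS0_le S t : idx S t -> distS S [::] (evalS S t) <= size t.
Proof.
move=> H; rewrite /distS.
set P := (X in natinf X).
have HP : P (size t).
  by exists t; split=> //; split=> //; rewrite /Defs.mul /= /evalS reduceK.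
exact: (natinf_spec HP).2.
Qed.

Lemma distS0_spec S x : in_gen S x -> exists t, idx S t /\
  size t = distS S [::] x /\ evalS S t = x.
Proof.
move=> [t0 [H0 E0]]; rewrite /distS.
set P := (X in natinf X).
have HP : P (size t0).
  by exists t0; split=> //; split=> //; rewrite /Defs.mul /= E0 /evalS reduceK.
have [[t [H1 [H2 H3]]] _] := natinf_spec HP.
exists t; split=> //; split=> //; rewrite H3 /Defs.mul /= E0 /evalS reduceK //.
Qed.

Lemma distS0_nil S : distS S [::] [::] = 0.
Proof. apply/eqP; rewrite -leqn0; exact: (distS0_le (S := S) (t := [::])). Qed.

Lemma size_in_gen S x : in_gen S x -> size x <= Lam S * distS S [::] x.
Proof.
move=> H; have [t [_ [<- <-]]] := distS0_spec H; exact: size_evalS.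
Qed.

Lemma distS0_tri S q x : in_gen S q -> in_gen S x ->
  distS S [::] (Defs.mul q x) <= distS S [::] q + distS S [::] x.
Proof.
move=> Hq Hx.
have [t1 [I1 [S1 E1]]] := distS0_spec Hq.
have [t2 [I2 [S2 E2]]] := distS0_spec Hx.
rewrite -S1 -S2 -size_cat -E1 -E2 -evalS_cat; apply: distS0_le; exact: idx_cat.
Qed.

Lemma in_gen_evalS S t : idx S t -> in_gen S (evalS S t).
Proof. by move=> H; exists t. Qed.

Lemma size_reduce_cat x y : size (reduce (x ++ y)) <= size x + size y.
Proof. by apply: leq_trans (size_reduce _) _; rewrite size_cat. Qed.

Lemma QC S t : idx S t -> forall i, exists q, in_gen S q /\
  size (reduce (winv q ++ take i (evalS S t))) <= Lam S.
Proof.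
elim/last_ind: t => [|t p IH].
  move=> _ i; exists [::]; split; first by exists [::].
  by [].
rewrite /idx all_rcons => /andP[Hp Ht] i.
have Ht' : idx S t by [].
have Hp' : idx S [:: p] by rewrite /idx /= Hp.
rewrite -cats1 evalS_cat /Defs.mul.
set h := evalS S t; set s := evalS S [:: p].
have Hs : size s <= Lam S by have := size_evalS S [:: p]; rewrite muln1.
have Nh : nocancel h := nocancel_reduce _.
have Ns : nocancel s := nocancel_reduce _.
have [c [Hc1 [Hc2 ->]]] := reduce_struct Nh Ns.
set m := size h - c.
have Hm : size (take m h) = m by rewrite size_takel // /m leq_subr.
rewrite take_cat Hm.
case: ifP => Him.
  have [q [Hq Hq2]] := IH Ht' i; exists q; split=> //.
  by rewrite take_takel // ltnW.
exists h; split; first exact: in_gen_evalS.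
rewrite -{1}(cat_take_drop m h) winv_cat -catA reduce_catl reduce_winvl -reduce_catl.
apply: leq_trans (size_reduce_cat _ _) _.
rewrite size_winv size_drop size_take size_drop.
apply: leq_trans Hs.
move: Hc1 Hc2; rewrite /m; clear; case: ifP => H; lia.
Qed.

Lemma size_reduce3 X Y Z : size (reduce (X ++ Y ++ Z)) <=
  size (reduce X) + size (reduce Y) + size (reduce Z).
Proof.
rewrite reduce_cat; apply: leq_trans (size_reduce_cat _ _) _.
rewrite -addnA leq_add2l reduce_cat; exact: size_reduce_cat.
Qed.

Lemma mul_back q q' : reduce q' = q' ->
  Defs.mul q (Defs.mul (winv q) q') = q'.
Proof.
move=> Hq'; rewrite /Defs.mul -reduce_catl reduce_winvr //.
Qed.

Lemma chain S D : (forall x, in_gen S x -> size x <= (Lam S).*2.+1 -> distS S [::] x <= D) ->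
  forall t, idx S t -> forall i, exists q, in_gen S q /\
   size (reduce (winv q ++ take i (evalS S t))) <= Lam S /\ distS S [::] q <= i * D.
Proof.
move=> HD t Ht; elim=> [|i [q [Hq [Hq1 Hq2]]]].
  exists [::]; split; first by exists [::].
  by rewrite take0 distS0_nil.
have [q' [Hq' Hq'1]] := QC Ht i.+1.
move: Hq1 Hq'1; set h := evalS S t => Hq1 Hq'1.
have E2 : take i.+1 h = take i h ++ take 1 (drop i h) by rewrite -[i.+1]addn1 takeD.
move: Hq1 Hq'1 E2; move: (take i h) (take i.+1 h) => p p2 Hq1 Hq'1 E2.
have Hx := in_gen_mul Hq Hq'.
have Ex : Defs.mul (winv q) q' = reduce ((winv q ++ p) ++ (winv p ++ p2) ++ (winv p2 ++ q')).
  rewrite /Defs.mul -!catA.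
  symmetry; rewrite reduce_catl (reduce_winvr p) (reduce_winvr p2) -reduce_catl //.
have Hsx : size (Defs.mul (winv q) q') <= (Lam S).*2.+1.
  rewrite Ex; apply: leq_trans (size_reduce3 _ _ _) _.
  have HB : size (reduce (winv p ++ p2)) <= 1.
    rewrite E2 reduce_winvl.
    by apply: leq_trans (size_reduce _) _; rewrite size_take; case: ltnP.
  have HC : size (reduce (winv p2 ++ q')) <= Lam S.
    have -> : winv p2 ++ q' = winv (winv q' ++ p2) by rewrite winv_cat winvK.
    by rewrite reduce_winv size_winv.
  move: Hq1 HB HC; lia.
exists q'; split=> //; split=> //.
have := distS0_tri Hq Hx.
rewrite mul_back ?(in_gen_reduced Hq') // => H.
apply: leq_trans H _; rewrite mulSn addnC; apply: leq_add => //.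
exact: HD.
Qed.

Lemma distS_bound S D : (forall x, in_gen S x -> size x <= (Lam S).*2.+1 -> distS S [::] x <= D) ->
  forall h, in_gen S h -> distS S [::] h <= (size h).*2 * D.
Proof.
move=> HD h [t [Ht Eh]].
have [q [Hq [Hq1 Hq2]]] := chain HD Ht (size h).
rewrite -Eh take_size in Hq1.
have Hx := in_gen_mul Hq (in_gen_evalS Ht); rewrite -Eh in Hx.
have Hhr : reduce h = h by rewrite Eh; exact: (in_gen_reduced (in_gen_evalS Ht)).
have := distS0_tri Hq Hx; rewrite mul_back // => H.
have Hd : distS S [::] (Defs.mul (winv q) h) <= D.
  apply: HD => //; apply: leq_trans Hq1 _; lia.
case: h Hhr Eh Hq2 H Hx Hq1 Hd => [|l h] Hhr Eh Hq2 H Hx Hq1 Hd.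
  by rewrite distS0_nil.
apply: leq_trans H _; move: Hq2 Hd; rewrite /= -!muln2 ; nia.
Qed.

Lemma bound_ex (A : seq letter) (F : word -> nat) B :
  exists D, forall x, all (fun l => l \in A) x -> size x <= B -> F x <= D.
Proof.
elim: B F => [|B IH] F.
  exists (F [::]) => x _; rewrite leqn0 size_eq0 => /eqP -> //.
have Hl : forall L : seq letter, exists D, forall l, l \in L -> forall x,
    all (fun l => l \in A) x -> size x <= B -> F (l :: x) <= D.
  elim=> [|l0 L [D HD]]; first by exists 0.
  have [D0 HD0] := IH (fun x => F (l0 :: x)).
  exists (maxn D0 D) => l; rewrite inE => /orP[/eqP ->|Hl] x Hx Hs.
    by apply: leq_trans (HD0 x Hx Hs) (leq_maxl _ _).
  by apply: leq_trans (HD l Hl x Hx Hs) (leq_maxr _ _).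
have [D HD] := Hl A.
exists (maxn (F [::]) D) => [[|l x]] /=; first by move=> _ _; exact: leq_maxl.
move=> /andP[Hl1 Hx] Hs; apply: leq_trans (HD l Hl1 x Hx Hs) (leq_maxr _ _).
Qed.

Lemma cons_F2 g h c d N : construction g h c d N -> forall j, 1 <= j -> lettersF2 (g j).
Proof.
move=> [[H1 _] [_ H]] [|j] // _.
case: j => [|j] //.
have [_ [[Hg _] _]] := H j.+1 isT; exact: Hg.
Qed.

Lemma Kn_F2 g h c d N n w : construction g h c d N -> Kn g n w -> all (fun l => l.1 < 2) w.
Proof.
move=> Hc [t [_ ->]]; apply: all_evalS => //.
move=> j; case: (ltnP j (size (map g (iota 1 n)))) => Hj.
  rewrite (nth_map 0); last by move: Hj; rewrite size_map.
  rewrite size_map size_iota in Hj; rewrite nth_iota //.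
  exact: (cons_F2 Hc).
by rewrite nth_default.
Qed.

Lemma nth_flatten (S : seq word) j : all (fun l => l \in flatten S) (nth [::] S j).
Proof.
elim: S j => [|s S IH] [|j] //=; rewrite ?nth_nil //.
  by apply/allP => l Hl; rewrite mem_cat Hl.
apply: sub_all (IH j) => l /= Hl; by rewrite mem_cat Hl orbT.
Qed.

Definition alph (S : seq word) := flatten S ++ map linv (flatten S).

Lemma alph_linv S l : l \in alph S -> linv l \in alph S.
Proof.
rewrite /alph !mem_cat => /orP[H|/mapP[l' H ->]].
  by rewrite (map_f linv H) orbT.
by rewrite linvK H.
Qed.

Lemma in_gen_alph S x : in_gen S x -> all (fun l => l \in alph S) x.
Proof.
move=> [t [_ ->]]; apply: all_evalS; first exact: alph_linv.
move=> j; apply: sub_all (nth_flatten S j) => l /= H; by rewrite /alph mem_cat H.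
Qed.

Lemma distG_le g x k k' : all (fun l => l.1 < 2) x -> x = Defs.mul (winv k) k' ->
  distG g k k' <= size x.
Proof.
move=> Hx Ex; rewrite /distG.
set P := (X in natinf X).
have HP : P (size x).
  exists x; split=> //; split.
    by apply: sub_all Hx => l /= H; apply: leq_trans H _.
  rewrite -Ex /Defs.mul (dstar_reduce (dstar_winvl x)); exact: relG_nil.
exact: (natinf_spec HP).2.
Qed.

Lemma distG_ge g hh c d N x k k' : construction g hh c d N ->
  all (fun l => l.1 < 2) x -> x = Defs.mul (winv k) k' ->
  size x <= distG g k k'.
Proof.
move=> Hc Hx Ex; rewrite /distG.
set P := (X in natinf X).
have HP : P (size x).
  exists x; split=> //; split.
    by apply: sub_all Hx => l /= H; apply: leq_trans H _.
  rewrite -Ex /Defs.mul (dstar_reduce (dstar_winvl x)); exact: relG_nil.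
have [[w [Hw1 [Hw2 Hw3]]] _] := natinf_spec HP.
rewrite -Hw1 -Ex in Hw3 *.
have HK : forall k, Kall g k -> all (fun l => l.1 < 2) k.
  by move=> k0 [n Hn]; exact: (Kn_F2 Hc Hn).
have := relG_fold HK Hw3.
rewrite /Defs.mul reduce_map_reduce map_cat map_fold_winv (map_fold_F2 Hx) => H0.
have Hxr : reduce x = x by rewrite Ex /Defs.mul reduceK.
rewrite -Hxr -(reduce_winvr (map fold w) x) reduce_catl H0 cats0.
apply: leq_trans (size_reduce _) _; by rewrite size_map.
Qed.

Lemma nat_main g hh c d N S : construction g hh c d N ->
  (forall w, Kn g 2 w -> in_gen S w) ->
  exists D L, forall k k', Kn g 2 k -> Kn g 2 k' ->
    distS S k k' <= D * distG g k k' /\ distG g k k' <= L * distS S k k' /\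
    distS S k k' <= D * L * (distS S [::] k + distS S [::] k').
Proof.
move=> Hc HSgen.
have [D HD] := bound_ex (alph S) (distS S [::]) (Lam S).*2.+1.
have HD' : forall x, in_gen S x -> size x <= (Lam S).*2.+1 -> distS S [::] x <= D.
  by move=> x Hx Hs; apply: HD => //; exact: in_gen_alph.
exists (D.*2), (Lam S) => k k' Hk Hk'.
have Gk := HSgen _ Hk; have Gk' := HSgen _ Hk'.
have Gx := in_gen_mul Gk Gk'.
set x := Defs.mul (winv k) k' in Gx.
have Fx : all (fun l => l.1 < 2) x.
  rewrite /x /Defs.mul; apply: all_reduce; rewrite all_cat (Kn_F2 Hc Hk') andbT.
  apply: all_winv => //; exact: (Kn_F2 Hc Hk).
have N1 : distS S k k' <= D.*2 * size x.
  by rewrite distS_eq; apply: leq_trans (distS_bound HD' Gx) _; rewrite -!muln2; lia.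
have N2 : size x <= Lam S * distS S k k'.
  by rewrite distS_eq; exact: size_in_gen.
have N3 : distG g k k' <= size x by exact: distG_le.
have N4 : size x <= distG g k k' by exact: (distG_ge Hc).
have N5 : size x <= size k + size k'.
  by apply: leq_trans (size_reduce_cat _ _) _; rewrite size_winv.
have N6 := size_in_gen Gk; have N7 := size_in_gen Gk'.
split; [|split].
- apply: leq_trans N1 _; exact: leq_mul.
- exact: leq_trans N3 N2.
- apply: leq_trans N1 _; rewrite -mulnA leq_mul2l mulnDr; apply/orP; right.
  apply: leq_trans N5 _; exact: leq_add.
Qed.

Local Open Scope R_scope.

Section U.
Variable om : (nat -> Prop) -> Prop.
Hypothesis Hom : ultrafilter om.

Lemma om_mono (A B : nat -> Prop) : (forall n, A n -> B n) -> om A -> om B.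
Proof. by case: Hom => _ [_ [H _]]; apply: H. Qed.

Lemma om_and (A B : nat -> Prop) : om A -> om B -> om (fun n => A n /\ B n).
Proof. by case: Hom => _ [_ [_ [H _]]]; apply: H. Qed.

Lemma om_ex (A : nat -> Prop) : om A -> exists n, A n.
Proof.
move=> H; apply: NNPP => H1; case: Hom => _ [Hf _]; apply: Hf.
apply: om_mono H => n Hn; apply: H1; by exists n.
Qed.

Lemma om_split (A : nat -> Prop) : om A \/ om (fun n => ~ A n).
Proof. by case: Hom => _ [_ [_ [_ H]]]; apply: H. Qed.

Lemma ulim_ex (a : nat -> R) (B : R) : (forall n, 0 <= a n) ->
  om (fun n => a n <= B) -> exists l, ulim om a l /\ 0 <= l.
Proof.
move=> Ha HB.
pose E := fun r => om (fun n => r <= a n).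
have Hub : forall r, E r -> r <= B.
  move=> r Hr; apply: Rnot_lt_le => Hlt.
  have [n [H1 H2]] := om_ex (om_and Hr HB); lra.
have HE0 : E 0.
  by apply: om_mono (proj1 Hom) => n _; apply: Ha.
have [l [Hl1 Hl2]] := completeness E (ex_intro _ B Hub) (ex_intro _ 0 HE0).
have Hl0 : 0 <= l by apply: Hl1.
exists l; split=> // eps Heps.
have Hlo : om (fun n => l - eps < a n).
  apply: NNPP => H.
  have : l <= l - eps; last lra.
  apply: Hl2 => r Hr; apply: Rnot_lt_le => Hlt; apply: H.
  by apply: om_mono Hr => n Hn; lra.
have Hhi : om (fun n => a n < l + eps).
  case: (om_split (fun n => a n < l + eps)) => // H.
  have : l + eps <= l; last lra.
  apply: Hl1; apply: om_mono H => n Hn; lra.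
apply: om_mono (om_and Hlo Hhi) => n [H1 H2].
apply: Rabs_def1; lra.
Qed.

Lemma ulim_le (a b : nat -> R) la lb c : ulim om a la -> ulim om b lb -> 0 <= c ->
  (forall n, a n <= c * b n) -> la <= c * lb.
Proof.
move=> Ha Hb Hc Hab; apply: Rnot_lt_le => Hlt.
set e := (la - c * lb) / (2 * (1 + c)).
have He : 0 < e by rewrite /e; apply: Rdiv_lt_0_compat; lra.
have Ee : e * (2 * (1 + c)) = la - c * lb by rewrite /e; field; lra.
have [n [H1 H2]] := om_ex (om_and (Ha e He) (Hb e He)).
have := Hab n.
move: H1 H2 => /Rabs_def2 [H1 H1'] /Rabs_def2 [H2 H2'] H3.
have H4 : c * b n <= c * (lb + e) by apply: Rmult_le_compat_l; lra.
nra.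
Qed.
End U.

Lemma div_le_aux x M d : 0 < d -> x <= M * d -> x / d <= M.
Proof.
move=> Hd H; rewrite /Rdiv.
have -> : M = M * d * / d by field; lra.
apply: Rmult_le_compat_r => //; left; exact: Rinv_0_lt_compat.
Qed.

Lemma div_nonneg x d : 0 < d -> 0 <= x -> 0 <= x / d.
Proof. move=> Hd Hx; apply: Rmult_le_pos => //; left; exact: Rinv_0_lt_compat. Qed.

Lemma INR_leb (m n : nat) : leq m n -> INR m <= INR n.
Proof. by move/leP; apply: le_INR. Qed.

Lemma INR_mulb (m n : nat) : INR (m * n) = INR m * INR n.
Proof. exact: mult_INR. Qed.

Local Close Scope R_scope.

Theorem proposition6p6
  (g h : nat -> word) (c d : nat -> letter) (N : nat -> nat)
  (Hcons : construction g h c d N)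
  (* a finite generating set S of K_2 *)
  (S : seq word) (HS : forall s, s \in S -> Kn g 2 s)
  (HSgen : forall w, Kn g 2 w -> in_gen S w)
  (* non-principal ultrafilter, scaling sequence with lim_omega d = oo *)
  (om : (nat -> Prop) -> Prop) (Hom : ultrafilter om) (Hnp : nonprincipal om)
  (dn : nat -> R) (Hdpos : forall n, (0 < dn n)%R)
  (Hdinf : forall M : R, om (fun n => (M < dn n)%R)) :
  exists L : R, (0 < L)%R /\
    forall k k' : nat -> word,
      (forall n, Kn g 2 (k n)) -> (forall n, Kn g 2 (k' n)) ->
      (exists C : R, om (fun n => (INR (distS S [::] (k n)) <= C * dn n)%R)) ->
      (exists C : R, om (fun n => (INR (distS S [::] (k' n)) <= C * dn n)%R)) ->
      exists lK lG : R,
        ulim om (fun n => INR (distS S (k n) (k' n)) / dn n)%R lK /\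
        ulim om (fun n => INR (distG g (k n) (k' n)) / dn n)%R lG /\
        (lK <= L * lG)%R /\ (lG <= L * lK)%R.
Proof.
have [D [La HDL]] := nat_main Hcons HSgen.
exists (INR (D + La + 1)); split.
  rewrite plus_INR; have := pos_INR (D + La); simpl; lra.
move=> k k' Hk Hk' [C HC] [C' HC'].
have HL1 : (INR D <= INR (D + La + 1))%R by apply: INR_leb; lia.
have HL2 : (INR La <= INR (D + La + 1))%R by apply: INR_leb; lia.
set a := fun n => (INR (distS S (k n) (k' n)) / dn n)%R.
set b := fun n => (INR (distG g (k n) (k' n)) / dn n)%R.
have Ha0 : forall n, (0 <= a n)%R by move=> n; apply: div_nonneg => //; exact: pos_INR.
have Hb0 : forall n, (0 <= b n)%R by move=> n; apply: div_nonneg => //; exact: pos_INR.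
have Hab : forall n, (a n <= INR D * b n)%R.
  move=> n; have [H1 _] := HDL _ _ (Hk n) (Hk' n).
  rewrite /a /b /Rdiv -Rmult_assoc; apply: Rmult_le_compat_r.
    left; exact: Rinv_0_lt_compat.
  by rewrite -INR_mulb; apply: INR_leb.
have Hba : forall n, (b n <= INR La * a n)%R.
  move=> n; have [_ [H1 _]] := HDL _ _ (Hk n) (Hk' n).
  rewrite /a /b /Rdiv -Rmult_assoc; apply: Rmult_le_compat_r.
    left; exact: Rinv_0_lt_compat.
  by rewrite -INR_mulb; apply: INR_leb.
have HaB : om (fun n => (a n <= INR (D * La) * (C + C'))%R).
  have H0 := om_and Hom HC HC'.
  refine (om_mono Hom _ H0) => n [H1 H2].
  have [_ [_ H3]] := HDL _ _ (Hk n) (Hk' n).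
  apply: div_le_aux => //.
  apply: Rle_trans (INR_leb H3) _.
  rewrite INR_mulb plus_INR.
  have := pos_INR (D * La); nra.
have [lK [HlK HlK0]] := ulim_ex Hom Ha0 HaB.
have HbB : om (fun n => (b n <= INR La * (INR (D * La) * (C + C')))%R).
  refine (om_mono Hom _ HaB) => n Hn.
  apply: Rle_trans (Hba n) _; apply: Rmult_le_compat_l => //; exact: pos_INR.
have [lG [HlG HlG0]] := ulim_ex Hom Hb0 HbB.
exists lK, lG; split=> //; split=> //; split.
- apply: Rle_trans (ulim_le Hom HlK HlG (pos_INR _) Hab) _.
  by apply: Rmult_le_compat_r.
- apply: Rle_trans (ulim_le Hom HlG HlK (pos_INR _) Hba) _.
  by apply: Rmult_le_compat_r.
Qed.
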